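(* Let $\alpha\in\mathbb{R}$, $\gamma,\sigma>0$. Let $p_Y$ be the density on $[0,\infty)$ \[ p_Y(y)=\frac{1}{\Phi\!\left(\frac{\alpha}{\sqrt{\sigma^2\gamma/2}}\right)\sqrt{\pi\sigma^2/\gamma}}\exp\!\left(-\frac{\gamma}{\sigma^2}\Big(y-\frac{\alpha}{\gamma}\Big)^2\right),\quad y\ge 0, \] ($\Phi$ the standard normal distribution function), let $F_Y$ be its distribution function and $\bar F_Y=1-F_Y$. Let $q_L:=\frac{\sigma^2}{2}p_Y(0)$, $W(v):=\exp\left(\frac{2\alpha v}{\sigma^2}-\frac{\gamma v^2}{\sigma^2}\right)$, and let \[ h(x)=\int_{0}^{x}\frac{1}{W(u)}\left(1-\frac{2q_L}{\sigma^{2}}\int_0^u W(v)\,\mathrm{d}v\right)\mathrm{d}u, \] i.e. the unique solution of $(\alpha-\gamma x)h'(x)+\frac{\sigma^2}{2}h''(x)=-q_L$ for $x\ge0$ with $h(0)=0$, $h'(0)=1$. Then for $x>0$, $h'(x)=\frac{p_Y(0)}{p_Y(x)}\bar F_Y(x)$. Moreover, $\int_0^\infty h'(x)^2p_Y(x)\,\mathrm{d}x<\infty$.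
   Context: $p_Y$ is the invariant (truncated normal) density of the Ornstein–Uhlenbeck process $\mathrm{d}Y_t=(\alpha-\gamma Y_t)\mathrm{d}t+\sigma\mathrm{d}W_t$ reflected at $0$ from below. *)

(* Defs.v *)
From Stdlib Require Import Reals.
From Coquelicot Require Import Coquelicot.
Open Scope R_scope.

Definition Phi (z : R) : R :=
  RInt_gen (fun t => exp (- t ^ 2 / 2)) (Rbar_locally m_infty) (at_point z)
  / sqrt (2 * PI).

Definition pY (alpha gamma sigma : R) (y : R) : R :=
  / (Phi (alpha / sqrt (sigma ^ 2 * gamma / 2)) * sqrt (PI * sigma ^ 2 / gamma))
  * exp (- (gamma / sigma ^ 2) * (y - alpha / gamma) ^ 2).

Definition FY (alpha gamma sigma : R) (x : R) : R :=
  RInt (pY alpha gamma sigma) 0 x.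
Definition barFY (alpha gamma sigma : R) (x : R) : R :=
  1 - FY alpha gamma sigma x.

Definition qL (alpha gamma sigma : R) : R :=
  sigma ^ 2 / 2 * pY alpha gamma sigma 0.

Definition W (alpha gamma sigma : R) (v : R) : R :=
  exp (2 * alpha * v / sigma ^ 2 - gamma * v ^ 2 / sigma ^ 2).

Definition h (alpha gamma sigma : R) (x : R) : R :=
  RInt (fun u => / W alpha gamma sigma u *
          (1 - 2 * qL alpha gamma sigma / sigma ^ 2 * RInt (W alpha gamma sigma) 0 u))
       0 x.

(* Main.v *)
Require Import Defs.
From Stdlib Require Import Reals Lra Psatz.
From Coquelicot Require Import Coquelicot.
Open Scope R_scope.

Lemma exRc (f : R -> R) a b : (forall x, continuous f x) -> ex_RInt f a b.
Proof. intros H; apply (ex_RInt_continuous (V := R_CompleteNormedModule)); intros; apply H. Qed.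

Lemma RInt_diff (f : R -> R) a u v : (forall x, continuous f x) ->
  RInt f a v - RInt f a u = RInt f u v.
Proof.
  intros H. rewrite <- (RInt_Chasles f a u v) by (apply exRc; auto).
  unfold plus; simpl; ring.
Qed.

Lemma exp_le' x y : x <= y -> exp x <= exp y.
Proof. intros [H|H]. left; apply exp_increasing; auto. subst; lra. Qed.

Lemma tail_aux (f : R -> R) (M B : R) :
  (forall x, continuous f x) -> (forall x, M <= x -> Rabs (f x) <= B * exp (-x)) ->
  forall u v, M <= u <= v -> Rabs (RInt f u v) <= Rabs B * exp (- u).
Proof.
  intros Hc Hb u v [Hu Hv].
  eapply Rle_trans. apply abs_RInt_le; [lra| apply exRc; auto].
  assert (HI : is_RInt (fun x => B * exp (-x)) u v (minus (- B * exp (-v)) (- B * exp (-u)))).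
  { apply (is_RInt_derive (fun x => - B * exp (-x))).
    - intros x _. auto_derive; auto. ring.
    - intros x _. apply (ex_derive_continuous (K:=R_AbsRing) (V:=R_NormedModule)). auto_derive; auto. }
  eapply Rle_trans. apply RInt_le with (g := fun x => B * exp (-x)); [lra | | eexists; exact HI |].
  apply exRc; intros. apply continuous_Rabs_comp. apply Hc.
  intros x Hx. apply Hb. lra.
  rewrite (is_RInt_unique _ _ _ _ HI). unfold minus, plus, opp; simpl.
  assert (0 < exp (-v)) by apply exp_pos.
  assert (exp (-v) <= exp (-u)) by (apply exp_le'; lra) .
  destruct (Rle_dec 0 B).
  - rewrite Rabs_pos_eq by lra. nra.
  - rewrite Rabs_left by lra. nra.
Qed.

Lemma tail_pinf (f : R -> R) (a M B : R) :
  (forall x, continuous f x) -> (forall x, M <= x -> Rabs (f x) <= B * exp (-x)) ->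
  exists L, filterlim (fun b => RInt f a b) (Rbar_locally p_infty) (locally L).
Proof.
  intros Hc Hb.
  apply (filterlim_locally_cauchy (F := Rbar_locally p_infty)).
  intros eps.
  set (N := Rmax M (ln ((Rabs B + 1) / eps))).
  exists (fun b => N < b). split. exists N; auto.
  assert (HN1 : M <= N) by apply Rmax_l.
  assert (HN2 : ln ((Rabs B + 1) / eps) <= N) by apply Rmax_r.
  assert (Heps := cond_pos eps).
  assert (HB : 0 < Rabs B + 1) by (pose proof (Rabs_pos B); lra).
  assert (key : forall u, N < u -> Rabs B * exp (- u) < eps).
  { intros u Hu.
    assert (exp (-u) < exp (- ln ((Rabs B + 1) / eps))) by (apply exp_increasing; lra).
    rewrite (exp_Ropp (ln _)), exp_ln in H by (apply Rdiv_lt_0_compat; lra).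
    assert (Rabs B * exp (-u) <= (Rabs B + 1) * exp (-u)) by (pose proof (exp_pos (-u)); nra).
    assert ((Rabs B + 1) * exp (-u) < (Rabs B + 1) * / ((Rabs B + 1) / eps)) by (apply Rmult_lt_compat_l; lra).
    replace ((Rabs B + 1) * / ((Rabs B + 1) / eps)) with (pos eps) in H1 by (field; lra). lra. }
  intros u v Hu Hv.
  unfold ball; simpl; unfold AbsRing_ball; simpl; unfold abs, minus, plus, opp; simpl.
  change (Rabs (RInt f a v - RInt f a u) < eps).
  rewrite RInt_diff by auto.
  destruct (Rle_dec u v).
  - eapply Rle_lt_trans. apply (tail_aux f M B); auto; lra. apply key; auto.
  - rewrite <- opp_RInt_swap by (apply exRc; auto). unfold opp; simpl. rewrite Rabs_Ropp.
    eapply Rle_lt_trans. apply (tail_aux f M B); auto; lra. apply key; auto.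
Qed.

Lemma gen_pinf (f : R -> R) a L : (forall x, continuous f x) ->
  filterlim (fun b => RInt f a b) (Rbar_locally p_infty) (locally L) ->
  is_RInt_gen f (at_point a) (Rbar_locally p_infty) L.
Proof.
  intros Hc Hl P HP.
  specialize (Hl P HP). destruct Hl as [M HM].
  apply (Filter_prod _ _ _ (fun x => x = a) (fun b => M < b)).
  - reflexivity.
  - exists M; auto.
  - intros x y Hx Hy. simpl in *. subst x. exists (RInt f a y). split.
    apply (RInt_correct (V:=R_CompleteNormedModule)), exRc; auto. apply HM; auto.
Qed.

Definition phi (t : R) := exp (- t ^ 2 / 2).

Lemma phi_cont x : continuous phi x.
Proof. apply (ex_derive_continuous (K:=R_AbsRing) (V:=R_NormedModule)). unfold phi; auto_derive; auto. Qed.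

Lemma phi_bound x : 0 <= x -> Rabs (phi x) <= exp (1/2) * exp (- x).
Proof.
  intros _. unfold phi. rewrite Rabs_pos_eq by (left; apply exp_pos).
  rewrite <- exp_plus. apply exp_le'. pose proof (pow2_ge_0 (x-1)). nra.
Qed.

Lemma phi_refl A z : RInt phi A z = RInt phi (-z) (-A).
Proof.
  pose proof (RInt_comp_lin phi (-1) 0 (-z) (-A)) as H.
  replace (-1 * - z + 0) with z in H by ring.
  replace (-1 * - A + 0) with A in H by ring.
  assert (E : RInt (fun y => scal (-1) (phi y)) (-z) (-A) = RInt phi z A).
  { rewrite <- H by (apply exRc; apply phi_cont). apply RInt_ext.
    intros x _. unfold phi. replace (-1 * x + 0) with (-x) by ring.
    replace ((-x)^2) with (x^2) by ring. reflexivity. }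
  rewrite (RInt_scal (V:=R_CompleteNormedModule)) in E by (apply exRc; apply phi_cont).
  rewrite <- opp_RInt_swap by (apply exRc; apply phi_cont). rewrite <- E.
  unfold opp, scal; simpl; unfold mult; simpl. ring.
Qed.

Lemma G_exists z : exists L, 0 < L /\ RInt_gen phi (Rbar_locally m_infty) (at_point z) = L /\
  filterlim (fun A => RInt phi A z) (Rbar_locally m_infty) (locally L).
Proof.
  destruct (tail_pinf phi (-z) 0 (exp (1/2)) phi_cont phi_bound) as [L HL].
  assert (Hm : filterlim (fun A => RInt phi A z) (Rbar_locally m_infty) (locally L)).
  { apply (filterlim_ext (fun A => RInt phi (-z) (- A))).
    intros; symmetry; apply phi_refl.
    apply (filterlim_comp _ _ _ Ropp (fun b => RInt phi (-z) b) _ (Rbar_locally p_infty)); auto.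
    exact (filterlim_Rbar_opp m_infty). }
  exists L. split; [|split; auto].
  - set (c := RInt phi (-z) (-z+1)).
    assert (Hc : 0 < c).
    { unfold c. replace 0 with (RInt (fun _ => 0) (-z) (-z+1)).
      apply RInt_lt. lra. intros; apply phi_cont. intros; apply continuous_const.
      intros; unfold phi; apply exp_pos.
      rewrite RInt_const. unfold scal; simpl; unfold mult; simpl. ring. }
    assert (H := is_lim_le_loc (fun _ => c) (fun b => RInt phi (-z) b) p_infty c L).
    simpl in H. assert (c <= L). apply H.
    + exists (-z+1). intros b Hb.
      rewrite <- (RInt_Chasles phi (-z) (-z+1) b) by (apply exRc; apply phi_cont).
      unfold plus; simpl. assert (0 <= RInt phi (-z+1) b).
      apply RInt_ge_0. lra. apply exRc; apply phi_cont. intros; left; unfold phi; apply exp_pos.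
      unfold c; lra.
    + apply is_lim_const.
    + exact HL.
    + lra.
  - apply is_RInt_gen_unique.
    intros P HP. destruct (Hm P HP) as [M HM].
    apply (Filter_prod _ _ _ (fun A => A < M) (fun x => x = z)).
    + exists M; auto.
    + reflexivity.
    + intros x y Hx Hy. simpl in *. subst y. exists (RInt phi x z). split.
      apply (RInt_correct (V:=R_CompleteNormedModule)), exRc, phi_cont. apply HM; auto.
Qed.

Lemma mass a g s : 0 < g -> 0 < s ->
  0 < pY a g s 0 /\
  filterlim (fun b => RInt (pY a g s) 0 b) (Rbar_locally p_infty) (locally 1).
Proof.
  intros hg hs.
  set (z0 := a / sqrt (s ^ 2 * g / 2)).
  destruct (G_exists z0) as [L [HL [HG Hlim]]].
  assert (hX : 0 < s ^ 2 * g / 2) by (apply Rdiv_lt_0_compat; [apply Rmult_lt_0_compat; [apply pow_lt|]|]; lra).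
  assert (hsq : 0 < sqrt (s ^ 2 * g / 2)) by (apply sqrt_lt_R0; auto).
  set (tau := sqrt (s ^ 2 * g / 2) / g).
  assert (htau : 0 < tau) by (apply Rdiv_lt_0_compat; auto).
  assert (htau2 : tau * tau = s ^ 2 / (2 * g)).
  { unfold tau. replace (sqrt (s ^ 2 * g / 2) / g * (sqrt (s ^ 2 * g / 2) / g))
      with (sqrt (s ^ 2 * g / 2) * sqrt (s ^ 2 * g / 2) / (g * g)) by (field; lra).
    rewrite sqrt_sqrt by lra. field. lra. }
  assert (hpi : 0 < PI) by apply PI_RGT_0.
  assert (hs2 : 0 < sqrt (2 * PI)) by (apply sqrt_lt_R0; lra).
  assert (hPhi : Phi z0 = L / sqrt (2 * PI)).
  { unfold Phi. change (RInt_gen phi (Rbar_locally m_infty) (at_point z0) / sqrt (2 * PI) = L / sqrt (2 * PI)).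
    rewrite HG. reflexivity. }
  assert (hsq2 : sqrt (PI * s ^ 2 / g) = tau * sqrt (2 * PI)).
  { rewrite <- (sqrt_square (tau * sqrt (2 * PI))) by (left; apply Rmult_lt_0_compat; auto).
    f_equal. replace (tau * sqrt (2 * PI) * (tau * sqrt (2 * PI))) with
      ((tau * tau) * (sqrt (2 * PI) * sqrt (2 * PI))) by ring.
    rewrite htau2, sqrt_sqrt by lra. field. lra. }
  set (C := / (Phi z0 * sqrt (PI * s ^ 2 / g))).
  assert (hC : C * tau * L = 1).
  { unfold C. rewrite hPhi, hsq2. field. repeat split; lra. }
  assert (hCpos : 0 < C).
  { unfold C. rewrite hPhi, hsq2. apply Rinv_0_lt_compat.
    apply Rmult_lt_0_compat. apply Rdiv_lt_0_compat; auto. apply Rmult_lt_0_compat; auto. }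
  assert (hpY : forall y, pY a g s y = C * exp (- (g / s ^ 2) * (y - a / g) ^ 2)) by reflexivity.
  assert (hcont : forall y, continuous (pY a g s) y).
  { intros y. apply (ex_derive_continuous (K:=R_AbsRing) (V:=R_NormedModule)).
    unfold pY. auto_derive. auto. }
  assert (Hid : forall b, RInt (pY a g s) 0 b = C * tau * RInt phi ((a / g - b) / tau) z0).
  { intros b.
    pose proof (RInt_comp_lin (pY a g s) (- tau) (a / g) z0 ((a / g - b) / tau)) as H.
    replace (- tau * z0 + a / g) with 0 in H by (unfold z0, tau; field; split; lra).
    replace (- tau * ((a / g - b) / tau) + a / g) with b in H by (field; lra).
    rewrite <- H by (apply exRc; auto).
    rewrite (RInt_ext _ (fun y => scal (- tau * C) (phi y))).
    rewrite (RInt_scal (V:=R_CompleteNormedModule)) by (apply exRc; apply phi_cont).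
    rewrite <- opp_RInt_swap by (apply exRc; apply phi_cont).
    unfold scal, opp; simpl; unfold mult; simpl. ring.
    intros y _. rewrite hpY.
    replace (- (g / s ^ 2) * (- tau * y + a / g - a / g) ^ 2) with (- y ^ 2 / 2).
    unfold scal, phi; simpl; unfold mult; simpl. ring.
    replace ((- tau * y + a / g - a / g) ^ 2) with ((tau * tau) * y ^ 2) by ring.
    rewrite htau2. field. lra. }
  split.
  - rewrite hpY. apply Rmult_lt_0_compat; auto. apply exp_pos.
  - apply (filterlim_ext (fun b => C * tau * RInt phi ((a / g - b) / tau) z0)).
    intros; symmetry; apply Hid.
    rewrite <- hC.
    apply (is_lim_scal_l (fun b => RInt phi ((a / g - b) / tau) z0) (C * tau) p_infty L).
    apply (filterlim_comp _ _ _ (fun b => (a / g - b) / tau) (fun A => RInt phi A z0) _ (Rbar_locally m_infty)); auto.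
    intros P [M HM]. exists (a / g - tau * M). intros x Hx. apply HM.
    apply (Rmult_lt_reg_l tau); auto. replace (tau * ((a / g - x) / tau)) with (a / g - x) by (field; lra).
    lra.
Qed.

Definition fh a g s (u : R) := / W a g s u * (1 - 2 * qL a g s / s ^ 2 * RInt (W a g s) 0 u).

Lemma W_pos a g s v : 0 < W a g s v.
Proof. apply exp_pos. Qed.

Lemma W_cont a g s v : continuous (W a g s) v.
Proof. apply (ex_derive_continuous (K:=R_AbsRing) (V:=R_NormedModule)). unfold W; auto_derive; auto. Qed.

Lemma IW_deriv a g s u : is_derive (fun u => RInt (W a g s) 0 u) u (W a g s u).
Proof.
  apply (is_derive_RInt (V:=R_CompleteNormedModule) _ _ 0).
  apply filter_forall. intros b. apply (RInt_correct (V:=R_CompleteNormedModule)), exRc, W_cont.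
  apply W_cont.
Qed.

Lemma fh_cont a g s u : continuous (fh a g s) u.
Proof.
  unfold fh.
  apply (continuous_mult (fun u => / W a g s u) (fun u => 1 - 2 * qL a g s / s ^ 2 * RInt (W a g s) 0 u)).
  - apply continuous_Rinv_comp. apply W_cont. apply Rgt_not_eq, W_pos.
  - apply (continuous_minus (fun _ => 1) (fun u => 2 * qL a g s / s ^ 2 * RInt (W a g s) 0 u)).
    apply continuous_const.
    apply (continuous_mult (fun _ => 2 * qL a g s / s ^ 2) (fun u => RInt (W a g s) 0 u)).
    apply continuous_const.
    apply (ex_derive_continuous (K:=R_AbsRing) (V:=R_NormedModule)). eexists; apply IW_deriv.
Qed.

Lemma h_deriv a g s x : is_derive (h a g s) x (fh a g s x).
Proof.
  apply (is_derive_RInt (V:=R_CompleteNormedModule) _ _ 0).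
  apply filter_forall. intros b. apply (RInt_correct (V:=R_CompleteNormedModule)), exRc, fh_cont.
  apply fh_cont.
Qed.

Lemma pY_W a g s v : 0 < g -> 0 < s -> pY a g s v = pY a g s 0 * W a g s v.
Proof.
  intros hg hs. unfold pY, W. rewrite Rmult_assoc, <- exp_plus. f_equal. f_equal. field. lra.
Qed.

Lemma K_eq a g s : 0 < s -> 2 * qL a g s / s ^ 2 = pY a g s 0.
Proof. intros hs. unfold qL. field. lra. Qed.

Lemma pY_cont a g s y : continuous (pY a g s) y.
Proof. apply (ex_derive_continuous (K:=R_AbsRing) (V:=R_NormedModule)). unfold pY; auto_derive; auto. Qed.

Lemma RInt_pY a g s x : 0 < g -> 0 < s -> RInt (pY a g s) 0 x = pY a g s 0 * RInt (W a g s) 0 x.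
Proof.
  intros hg hs.
  rewrite (RInt_ext _ (fun v => scal (pY a g s 0) (W a g s v))).
  rewrite (RInt_scal (V:=R_CompleteNormedModule)) by (apply exRc, W_cont). reflexivity.
  intros v _. apply pY_W; auto.
Qed.

Lemma fh_eq a g s x : 0 < g -> 0 < s -> fh a g s x = / W a g s x * barFY a g s x.
Proof.
  intros hg hs. unfold fh, barFY, FY. rewrite K_eq, RInt_pY; auto.
Qed.

Lemma pY_deriv a g s v : 0 < g -> 0 < s ->
  is_derive (pY a g s) v (- (2 * g / s ^ 2) * (v - a / g) * pY a g s v).
Proof.
  intros hg hs. unfold pY. set (C := / (Phi _ * _)). auto_derive; auto. simpl. unfold Rminus. field. lra.
Qed.

Lemma tail_bound a g s x : 0 < g -> 0 < s -> a / g + 1 <= x ->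
  0 <= barFY a g s x <= s ^ 2 / (2 * g) * pY a g s x.
Proof.
  intros hg hs hx.
  destruct (mass a g s hg hs) as [hp0 Hlim].
  assert (hpos : forall v, 0 < pY a g s v).
  { intros v. rewrite pY_W by auto. apply Rmult_lt_0_compat; auto. apply W_pos. }
  set (D := s ^ 2 / (2 * g)).
  assert (hD : 0 < D) by (unfold D; apply Rdiv_lt_0_compat; [apply pow_lt|]; lra).
  assert (Hb : forall b, x <= b -> RInt (pY a g s) 0 x <= RInt (pY a g s) 0 b <= RInt (pY a g s) 0 x + D * pY a g s x).
  { intros b hb.
    assert (E : RInt (pY a g s) 0 b = RInt (pY a g s) 0 x + RInt (pY a g s) x b).
    { pose proof (RInt_diff (pY a g s) 0 x b (pY_cont a g s)) as Hd. lra. }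
    rewrite E.
    assert (0 <= RInt (pY a g s) x b).
    { apply RInt_ge_0; auto. apply exRc, pY_cont. intros; left; auto. }
    assert (HI : is_RInt (fun v => (v - a / g) * pY a g s v) x b
                   (minus (- D * pY a g s b) (- D * pY a g s x))).
    { apply (is_RInt_derive (fun v => - D * pY a g s v)).
      - intros v _.
        replace ((v - a / g) * pY a g s v) with (- D * (- (2 * g / s ^ 2) * (v - a / g) * pY a g s v))
          by (unfold D; field; lra).
        apply is_derive_scal. apply pY_deriv; auto.
      - intros v _. apply (continuous_mult (fun v => v - a / g) (pY a g s)).
        apply (continuous_minus (fun v => v) (fun _ => a / g)).
        apply continuous_id. apply continuous_const. apply pY_cont. }
    assert (RInt (pY a g s) x b <= RInt (fun v => (v - a / g) * pY a g s v) x b).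
    { apply RInt_le; auto. apply exRc, pY_cont. eexists; exact HI.
      intros v hv. specialize (hpos v). nra. }
    rewrite (is_RInt_unique _ _ _ _ HI) in H0. unfold minus, plus, opp in H0; simpl in H0.
    specialize (hpos b). split; nra. }
  assert (H1 := is_lim_le_loc (fun _ => RInt (pY a g s) 0 x) (fun b => RInt (pY a g s) 0 b) p_infty (RInt (pY a g s) 0 x) 1).
  assert (H2 := is_lim_le_loc (fun b => RInt (pY a g s) 0 b) (fun _ => RInt (pY a g s) 0 x + D * pY a g s x) p_infty 1 (RInt (pY a g s) 0 x + D * pY a g s x)).
  simpl in H1, H2.
  assert (RInt (pY a g s) 0 x <= 1).
  { apply H1. exists x. intros b hb. apply Hb; lra. apply is_lim_const. exact Hlim. }
  assert (1 <= RInt (pY a g s) 0 x + D * pY a g s x).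
  { apply H2. exists x. intros b hb. apply Hb; lra. exact Hlim. apply is_lim_const. }
  unfold barFY, FY. split; lra.
Qed.

Lemma W_le a g s x : 0 < g -> 0 < s -> 0 <= x -> (2 * Rabs a + s ^ 2) / g <= x -> W a g s x <= exp (- x).
Proof.
  intros hg hs hx0 hx. unfold W. apply exp_le'.
  assert (hs2 : 0 < s ^ 2) by (apply pow_lt; lra).
  assert (2 * Rabs a + s ^ 2 <= g * x).
  { apply (Rmult_le_compat_l g) in hx; [|lra]. replace (g * ((2 * Rabs a + s ^ 2) / g)) with (2 * Rabs a + s ^ 2) in hx by (field; lra). lra. }
  assert (a <= Rabs a) by apply Rle_abs.
  assert (2 * a * x - g * x ^ 2 <= - (s ^ 2) * x) by nra.
  replace (2 * a * x / s ^ 2 - g * x ^ 2 / s ^ 2) with ((2 * a * x - g * x ^ 2) * / s ^ 2) by (field; lra).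
  replace (- x) with ((- (s ^ 2) * x) * / s ^ 2) by (field; lra).
  apply Rmult_le_compat_r; [left; apply Rinv_0_lt_compat; auto | auto].
Qed.

Theorem lemma4 (alpha gamma sigma : R) (hgamma : 0 < gamma) (hsigma : 0 < sigma) :
  (forall x : R, 0 < x ->
     is_derive (h alpha gamma sigma) x
       (pY alpha gamma sigma 0 / pY alpha gamma sigma x * barFY alpha gamma sigma x))
  /\ ex_RInt_gen
       (fun x => (Derive (h alpha gamma sigma) x) ^ 2 * pY alpha gamma sigma x)
       (at_point 0) (Rbar_locally p_infty).
Proof.
  set (a := alpha). set (g := gamma). set (s := sigma).
  assert (hg : 0 < g) by exact hgamma. assert (hs : 0 < s) by exact hsigma.
  destruct (mass a g s hgamma hsigma) as [hp0 _].
  assert (hW : forall x, pY a g s x = pY a g s 0 * W a g s x) by (intros; apply pY_W; auto).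
  assert (hD : forall x, Derive (h a g s) x = fh a g s x) by (intros; apply is_derive_unique, h_deriv).
  split.
  - intros x _.
    replace (pY a g s 0 / pY a g s x * barFY a g s x) with (fh a g s x).
    apply h_deriv.
    rewrite fh_eq by auto. rewrite (hW x). field. split; [apply Rgt_not_eq, W_pos| lra].
  - set (q := fun x => Derive (h a g s) x ^ 2 * pY a g s x).
    assert (hq : forall x, q x = fh a g s x * fh a g s x * pY a g s x).
    { intros x; unfold q; rewrite hD; ring. }
    assert (hqc : forall x, continuous q x).
    { intros x. apply (continuous_ext (fun x => fh a g s x * fh a g s x * pY a g s x)).
      intros; symmetry; apply hq.
      apply (continuous_mult (fun x => fh a g s x * fh a g s x) (pY a g s)).
      apply (continuous_mult (fh a g s) (fh a g s)); apply fh_cont.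
      apply pY_cont. }
    set (D := s ^ 2 / (2 * g)).
    set (Mx := Rmax (a / g + 1) ((2 * Rabs a + s ^ 2) / g)).
    set (B := (D * pY a g s 0) ^ 2 * pY a g s 0).
    assert (hbound : forall x, Mx <= x -> Rabs (q x) <= B * exp (- x)).
    { intros x hx.
      assert (h1 : a / g + 1 <= x) by (eapply Rle_trans; [apply Rmax_l | exact hx]).
      assert (h2 : (2 * Rabs a + s ^ 2) / g <= x) by (eapply Rle_trans; [apply Rmax_r | exact hx]).
      assert (h0 : 0 <= x).
      { eapply Rle_trans; [|exact h2]. apply Rmult_le_pos. pose proof (Rabs_pos a).
        pose proof (pow2_ge_0 s). lra. left; apply Rinv_0_lt_compat; auto. }
      destruct (tail_bound a g s x hgamma hsigma h1) as [F0 F1].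
      assert (hw := W_pos a g s x). assert (hwe := W_le a g s x hgamma hsigma h0 h2).
      rewrite hq, fh_eq by auto.
      set (w := W a g s x) in *. set (F := barFY a g s x) in *. set (p0 := pY a g s 0) in *.
      rewrite (hW x) in F1. fold p0 w in F1.
      rewrite (hW x). fold p0 w.
      assert (hu0 : 0 <= / w * F) by (apply Rmult_le_pos; [left; apply Rinv_0_lt_compat|]; auto).
      assert (hu1 : / w * F <= D * p0).
      { replace (D * p0) with (/ w * (D * (p0 * w))) by (field; lra).
        apply Rmult_le_compat_l; [left; apply Rinv_0_lt_compat; auto | exact F1]. }
      set (u := / w * F) in *.
      assert (hD0 : 0 <= D).
      { unfold D. pose proof (pow2_ge_0 s). apply Rmult_le_pos; auto. left. apply Rinv_0_lt_compat. lra. }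
      assert (hq0 : 0 <= u * u * (p0 * w)) by (apply Rmult_le_pos; [nra | nra]).
      rewrite Rabs_pos_eq by exact hq0. unfold B.
      assert (u * u <= (D * p0) ^ 2) by nra.
      assert (0 <= p0 * w) by nra.
      assert (u * u * (p0 * w) <= (D * p0) ^ 2 * (p0 * w)) by (apply Rmult_le_compat_r; auto).
      assert (0 <= (D * p0) ^ 2 * p0) by (apply Rmult_le_pos; [apply pow2_ge_0| lra]).
      assert ((D * p0) ^ 2 * p0 * w <= (D * p0) ^ 2 * p0 * exp (-x)) by (apply Rmult_le_compat_l; auto).
      lra. }
    destruct (tail_pinf q 0 Mx B hqc hbound) as [L HL].
    exists L. apply gen_pinf; auto.
Qed.
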